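(* For every $k\in[n]$ and every signaling scheme $\mathcal{Z}'$ for $\mathcal{D}$, \[\int_0^{F_{\mathcal{D}}(v_k)} s_{\mathcal{Z}'}(x)\,dx\ \le\ V_k-\max_{i\in[k]}\Big\{v_i\sum_{j=i}^k f_{\mathcal{D}}(v_j)\Big\},\qquad\text{where } V_k=\sum_{i=1}^k v_i f_{\mathcal{D}}(v_i).\]
   Context: Values and prior. $0<v_1<\dots<v_n$ are reals, and $v_0:=0$. $\mathcal{D}$ is a distribution on $\{v_1,\dots,v_n\}$ with $f_{\mathcal{D}}(v_i)>0$ and CDF $F_{\mathcal{D}}$. Signals and pricing. A signal is a distribution $S$ on these values, with $G_S(p)=\Pr_{v\sim S}[v\ge p]$. The seller posts $p^*_S$, the smallest $v$ in the support of $S$ maximizing $v\,G_S(v)$. The surplus of value $v$ is $cs_v(S)=\mathbb{1}[v\ge p^*_S](v-p^*_S)$. Signaling schemes. A signaling scheme is $\mathcal{Z}=\{(S_q,\gamma_q)\}_{q\in[Q]}$ with $\gamma_q\ge0$, $\sum\gamma_q=1$ and $\sum_q\gamma_q f_{S_q}=f_{\mathcal{D}}$. Its expected consumer surplus at $v_i$ is $cs_{v_i}(\mathcal{Z})=\sum_q cs_{v_i}(S_q)\gamma_q f_{S_q}(v_i)/f_{\mathcal{D}}(v_i)$. The surplus-mass function $s_{\mathcal{Z}}$ on $(0,1]$ equals $cs_{v_i}(\mathcal{Z})$ on $(F_{\mathcal{D}}(v_{i-1}),F_{\mathcal{D}}(v_i)]$. In particular, $\int_0^{F_{\mathcal{D}}(v_k)}s_{\mathcal{Z}}=\sum_{i\le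 k}f_{\mathcal{D}}(v_i)\,cs_{v_i}(\mathcal{Z})$. *)

(* Defs.v *)
From HB Require Import structures.
From mathcomp Require Import all_boot all_order all_algebra.
Set Implicit Arguments. Unset Strict Implicit. Unset Printing Implicit Defensive.
Import Order.TTheory GRing.Theory Num.Theory.
Local Open Scope ring_scope.

(* Values v_1 < ... < v_n are represented by v : 'I_n -> R
   (ordinal i stands for the paper's index i+1).  A distribution on the
   values (the prior D, or a signal S) is a mass function 'I_n -> R. *)

Section Pricing.
Variables (R : realFieldType) (n : nat) (v : 'I_n -> R).

(* G_S(p) = Pr_{v ~ S}[v >= p], evaluated at p = v_i *)
Definition G (S : 'I_n -> R) (i : 'I_n) : R := \sum_(j | v i <= v j) S j.

Definition rev (S : 'I_n -> R) (i : 'I_n) : R := v i * G S i.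

Definition is_opt (S : 'I_n -> R) (i : 'I_n) : bool :=
  (0 < S i) && [forall j : 'I_n, (0 < S j) ==> (rev S j <= rev S i)].

(* the index of p*_S: the smallest (equivalently, since v is increasing,
   the one with the smallest value) support point maximizing revenue *)
Definition price_idx (S : 'I_n -> R) : option 'I_n :=
  [pick i | is_opt S i && [forall j : 'I_n, (j < i)%N ==> ~~ is_opt S j]].

Definition cs (S : 'I_n -> R) (i : 'I_n) : R :=
  match price_idx S with
  | Some p => if v p <= v i then v i - v p else 0
  | None => 0
  end.

Definition is_distr (f : 'I_n -> R) : Prop :=
  (forall i, 0 <= f i) /\ \sum_i f i = 1.

Definition is_scheme (D : 'I_n -> R) (Q : nat)
    (S : 'I_Q -> 'I_n -> R) (gam : 'I_Q -> R) : Prop :=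
  (forall q, is_distr (S q)) /\ (forall q, 0 <= gam q) /\
  \sum_q gam q = 1 /\ (forall i, \sum_q gam q * S q i = D i).

Definition cs_scheme (D : 'I_n -> R) (Q : nat)
    (S : 'I_Q -> 'I_n -> R) (gam : 'I_Q -> R) (i : 'I_n) : R :=
  \sum_q cs (S q) i * gam q * S q i / D i.

(* int_0^{F_D(v_k)} s_Z(x) dx, for the step function s_Z which equals
   cs_{v_i}(Z) on (F_D(v_{i-1}), F_D(v_i)] (an interval of length f_D(v_i)) *)
Definition surplus_integral (D : 'I_n -> R) (Q : nat)
    (S : 'I_Q -> 'I_n -> R) (gam : 'I_Q -> R) (k : 'I_n) : R :=
  \sum_(i : 'I_n | (i <= k)%N) D i * cs_scheme D S gam i.

Definition Vk (D : 'I_n -> R) (k : 'I_n) : R :=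
  \sum_(i : 'I_n | (i <= k)%N) v i * D i.

(* max_{i in [k]} v_i * sum_{j=i}^k f_D(v_j)  (all terms are positive,
   so 0 is a harmless neutral element for the max) *)
Definition maxterm (D : 'I_n -> R) (k : 'I_n) : R :=
  \big[Num.max/0]_(i : 'I_n | (i <= k)%N)
     (v i * \sum_(j : 'I_n | (i <= j <= k)%N) D j).

End Pricing.

(* Main.v *)
Require Import Defs.
From HB Require Import structures.
From mathcomp Require Import all_boot all_order all_algebra.
From mathcomp Require Import ring lra.
Import Order.TTheory GRing.Theory Num.Theory.
Local Open Scope ring_scope.

Section Aux.
Variables (R : realFieldType) (n : nat) (v : 'I_n -> R).
Hypothesis v_pos : forall i, 0 < v i.
Hypothesis v_incr : forall i j : 'I_n, (i < j)%N -> v i < v j.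

Lemma vle i j : (v i <= v j) = (i <= j)%N.
Proof.
case: (ltngtP i j) => h.
- by rewrite ltW // v_incr.
- by apply/negbTE; rewrite -ltNge v_incr.
- by rewrite (val_inj h) lexx.
Qed.

Lemma GE S i : G v S i = \sum_(j : 'I_n | (i <= j)%N) S j.
Proof. by apply: eq_bigl => j; rewrite vle. Qed.

Lemma rev_max {S p} : price_idx v S = Some p -> (forall i, 0 <= S i) ->
  forall m, v m * G v S m <= v p * G v S p.
Proof.
move=> hp S0 m.
have: is_opt v S p.
  by move: hp; rewrite /price_idx; case: pickP => // x /andP[? _] [<-].
move=> /andP[Sp /forallP opt].
have G0 x : 0 <= G v S x by apply: sumr_ge0.
case: (boolP [exists j : 'I_n, (m <= j)%N && (0 < S j)]) => [/existsP[j0 hj0] | /existsPn hn].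
- have [j /andP[mj Sj] jmin] := @arg_minnP _ j0 (fun j : 'I_n => (m <= j)%N && (0 < S j)) (fun j : 'I_n => (j : nat)) hj0.
  have -> : G v S m = G v S j.
    rewrite !GE (bigID (fun i : 'I_n => (j <= i)%N)) /= [X in _ + X = _]big1 ?addr0.
      apply: eq_bigl => i /=; apply/andP/idP => [[]//|h]; split=>//.
      exact: leq_trans mj h.
    move=> i /andP[mi]; rewrite -ltnNge => ij.
    apply/eqP; rewrite eq_le S0 andbT leNgt; apply/negP => Si.
    have := jmin i; rewrite mi Si => /(_ isT). by rewrite leqNgt ij.
  apply: le_trans (_ : v j * G v S j <= _).
    by apply: ler_wpM2r => //; rewrite vle.
  by have := opt j; rewrite Sj /= /rev.
- rewrite GE big1 ?mulr0; first by apply: mulr_ge0 => //; exact: ltW.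
  move=> i mi; have := hn i; rewrite mi /= => /negP Si.
  by apply/eqP; rewrite eq_le S0 andbT leNgt; apply/negP.
Qed.

Lemma Gsplit S (l k : 'I_n) : (l <= k)%N ->
  G v S l = \sum_(j : 'I_n | (l <= j <= k)%N) S j + \sum_(j : 'I_n | (k < j)%N) S j.
Proof.
move=> lk; rewrite GE (bigID (fun j : 'I_n => (j <= k)%N)) /=; congr (_ + _).
apply: eq_bigl => j; rewrite -ltnNge; apply/andP/idP => [[]//|h]; split=>//.
exact: leq_trans lk (ltnW h).
Qed.

Lemma sig_bound S (Sd : is_distr S) (m k : 'I_n) : (m <= k)%N ->
  v m * \sum_(j : 'I_n | (m <= j <= k)%N) S j <=
  \sum_(i : 'I_n | (i <= k)%N) S i * (v i - cs v S i).
Proof.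
move=> mk; have S0 := Sd.1.
have term0 i : 0 <= S i * (v i - cs v S i).
  apply: mulr_ge0 => //; rewrite subr_ge0 /cs.
  case: price_idx => [p|]; last exact: ltW.
  case: ifP => _; last exact: ltW.
  have := v_pos p; lra.
have drop l : \sum_(i : 'I_n | (l <= i <= k)%N) S i * (v i - cs v S i) <=
    \sum_(i : 'I_n | (i <= k)%N) S i * (v i - cs v S i).
  rewrite [X in _ <= X](bigID (fun i : 'I_n => (l <= i)%N)) /=.
  rewrite -[X in X <= _]addr0; apply: lerD; last by apply: sumr_ge0.
  by rewrite le_eqVlt; apply/orP; left; apply/eqP;
     apply: eq_bigl => i; rewrite andbC.
have easy : (forall i : 'I_n, (m <= i)%N -> v m * S i <= S i * (v i - cs v S i)) ->
    v m * \sum_(j : 'I_n | (m <= j <= k)%N) S j <= \sum_(i : 'I_n | (i <= k)%N) S i * (v i - cs v S i).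
  move=> h; apply: le_trans (drop m); rewrite mulr_sumr; apply: ler_sum.
  by move=> i /andP[mi _]; apply: h.
case hp: (price_idx v S) => [p|]; last first.
  apply: easy => i mi; rewrite /cs hp subr0 mulrC; apply: ler_wpM2l => //.
  by rewrite vle.
case: (leqP p m) => pm; last first.
  apply: easy => i mi; rewrite /cs hp; case: ifP => h.
    rewrite opprB addrC subrK mulrC; apply: ler_wpM2l => //.
    by rewrite ltW // v_incr.
  by rewrite subr0 mulrC; apply: ler_wpM2l => //; rewrite vle.
apply: le_trans (drop p).
have -> : \sum_(i : 'I_n | (p <= i <= k)%N) S i * (v i - cs v S i) =
    v p * \sum_(i : 'I_n | (p <= i <= k)%N) S i.
  rewrite mulr_sumr; apply: eq_bigr => i /andP[pi _].
  by rewrite /cs hp vle pi opprB addrC subrK mulrC.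
have pk : (p <= k)%N by exact: leq_trans pm mk.
have := rev_max hp S0 m; rewrite (Gsplit S _ _ mk) (Gsplit S _ _ pk).
set A := \sum_(j : 'I_n | (m <= j <= k)%N) S j.
set B := \sum_(j : 'I_n | (p <= j <= k)%N) S j.
set T := \sum_(j : 'I_n | (k < j)%N) S j.
have T0 : 0 <= T by apply: sumr_ge0.
have : v p * T <= v m * T by apply: ler_wpM2r => //; rewrite vle.
rewrite !mulrDr; lra.
Qed.


End Aux.

Theorem lemma3 (R : realFieldType) (n : nat) (v : 'I_n -> R) (D : 'I_n -> R)
  (v_pos : forall i, 0 < v i)
  (v_incr : forall i j : 'I_n, (i < j)%N -> v i < v j)
  (D_pos : forall i, 0 < D i)
  (D_sum : \sum_i D i = 1)
  (k : 'I_n) (Q : nat) (S : 'I_Q -> 'I_n -> R) (gam : 'I_Q -> R)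
  (hZ : is_scheme D S gam) :
  surplus_integral v D S gam k <= Vk v D k - maxterm v D k.
Proof.
case: hZ => [Sd [g0 [gs DS]]].
set L := fun q => \sum_(i : 'I_n | (i <= k)%N) S q i * (v i - cs v (S q) i).
have E : Vk v D k - surplus_integral v D S gam k = \sum_q gam q * L q.
  rewrite /Vk /surplus_integral /cs_scheme -sumrB.
  have -> : \sum_q gam q * L q =
      \sum_q \sum_(i : 'I_n | (i <= k)%N) gam q * (S q i * (v i - cs v (S q) i)).
    by apply: eq_bigr => q _; rewrite mulr_sumr.
  rewrite exchange_big /=; apply: eq_bigr => i _.
  have := D_pos i; rewrite lt0r => /andP[Dn _].
  rewrite [X in _ - X]mulr_sumr -[X in v i * X]DS mulr_sumr -sumrB.
  apply: eq_bigr => q _.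
  field; exact: Dn.
suff : maxterm v D k <= \sum_q gam q * L q by rewrite -E; lra.
apply: bigmax_le.
  apply: sumr_ge0 => q _; apply: mulr_ge0 => //.
  rewrite /L; apply: le_trans (@sig_bound _ _ _ v_pos v_incr _ (Sd q) k k (leqnn k)).
  apply: mulr_ge0; first exact: ltW.
  by apply: sumr_ge0 => j _; apply: (Sd q).1.
move=> m /= mk.
have -> : v m * \sum_(j : 'I_n | (m <= j <= k)%N) D j =
    \sum_q gam q * (v m * \sum_(j : 'I_n | (m <= j <= k)%N) S q j).
  rewrite (eq_bigr (fun j => \sum_q gam q * S q j)); last by move=> j _; rewrite DS.
  rewrite exchange_big mulr_sumr; apply: eq_bigr => q _.
  by rewrite !mulr_sumr; apply: eq_bigr => j _; rewrite mulrCA.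
apply: ler_sum => q _; apply: ler_wpM2l => //.
exact: sig_bound.
Qed.
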